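(* Let $(X,\le)$ be a poset and $E$ an equivalence relation on $X$ with ${\le}\subseteq E$; let $\alpha:X\to X$ be an order automorphism and $\beta:X\to X$ a self-inverse dual order automorphism of $(X,\le)$ with $\alpha,\beta\subseteq E$ and $\beta=\alpha\circ\beta\circ\alpha$, and let $\mathbf A=\mathbf{Dq}(\mathbf E)=\langle\mathsf{Up}(\mathbf E),\cap,\cup,\circ,{\le},0,{\sim},-,'\rangle$ with $0=\alpha\circ({\le}^c)^\smile$ and $R'=\alpha\circ\beta\circ R^c\circ\beta$. Let $n\in\omega$, and for $R\in\mathsf{Up}(\mathbf E)$ let $R^{\triangledown n}={\sim}^{2n}(R')$ and $R^{\vartriangle n}=-^{2n}(R')$. Then there are self-inverse dual order automorphisms $\beta_{\triangledown n}$ and $\beta_{\vartriangle n}$ of $(X,\le)$ such that (i) $\beta_{\triangledown n},\beta_{\vartriangle n}\subseteq E$; (ii) $\beta_{\triangledown n}=\alpha\circ\beta_{\triangledown n}\circ\alpha$ and $\beta_{\vartriangle n}=\alpha\circ\beta_{\vartriangle n}\circ\alpha$; (iii) for all $R\in\mathsf{Up}(\mathbf E)$, $R^{\triangledown n}=\alpha\circ\beta_{\triangledown n}\circ R^c\circ\beta_{\triangledown n}$ and $R^{\vartriangle n}=\alpha\circ\beta_{\vartriangle n}\circ R^c\circ\beta_{\vartriangle n}$.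
   Context: For binary relations: converse $R^\smile=\{(x,y)\mid(y,x)\in R\}$; composition $R\circ S=\{(x,y)\mid\exists z\,((x,z)\in R,(z,y)\in S)\}$. Functions are identified with their graphs. For a poset $(X,\le)$ and an equivalence relation $E\supseteq{\le}$, $E$ is partially ordered by $(u,v)\preceq(x,y)$ iff $x\le u$ and $v\le y$; $\mathbf E=(E,\preceq)$, $\mathsf{Up}(\mathbf E)$ its up-sets. For $R\subseteq E$, $R^c=E\setminus R$. On $\mathsf{Up}(\mathbf E)$: ${\sim}R=(R^\smile\circ 0^c)^c$ and $-R=(0^c\circ R^\smile)^c$; ${\sim}^k,-^k$ are $k$-fold applications. Order automorphism: bijection with $x\le y\iff\alpha(x)\le\alpha(y)$; dual order automorphism: bijection with $x\le y\iff\beta(y)\le\beta(x)$; self-inverse: $\beta\circ\beta=\mathrm{id}_X$. *)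

(* Defs.v *)
From Stdlib Require Import PeanoNat.

Section Rel.
Context {X : Type}.

Definition relation := X -> X -> Prop.

Definition conv (R : relation) : relation := fun x y => R y x.
Definition comp (R S : relation) : relation :=
  fun x y => exists z, R x z /\ S z y.
Definition graph (f : X -> X) : relation := fun x y => f x = y.
(* relative complement R^c = E \ R *)
Definition rcompl (E R : relation) : relation := fun x y => E x y /\ ~ R x y.

Definition subrel (R S : relation) : Prop := forall x y, R x y -> S x y.
Definition releq (R S : relation) : Prop := forall x y, R x y <-> S x y.

Definition is_poset (le : relation) : Prop :=
  (forall x, le x x) /\
  (forall x y, le x y -> le y x -> x = y) /\
  (forall x y z, le x y -> le y z -> le x z).

Definition is_equivalence (E : relation) : Prop :=
  (forall x, E x x) /\
  (forall x y, E x y -> E y x) /\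
  (forall x y z, E x y -> E y z -> E x z).

Definition bijective_fun (f : X -> X) : Prop :=
  (forall x y, f x = f y -> x = y) /\ (forall y, exists x, f x = y).

Definition order_automorphism (le : relation) (f : X -> X) : Prop :=
  bijective_fun f /\ (forall x y, le x y <-> le (f x) (f y)).

Definition dual_order_automorphism (le : relation) (f : X -> X) : Prop :=
  bijective_fun f /\ (forall x y, le x y <-> le (f y) (f x)).

Definition self_inverse (f : X -> X) : Prop := forall x, f (f x) = x.

(* R is an up-set of E = (E, ⪯), where (u,v) ⪯ (x,y) iff x <= u and v <= y *)
Definition upset (le E R : relation) : Prop :=
  subrel R E /\
  (forall u v x y, R u v -> E x y -> le x u -> le v y -> R x y).

Definition dq_zero (le E : relation) (alpha : X -> X) : relation :=
  comp (graph alpha) (conv (rcompl E le)).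

Definition dq_sim (le E : relation) (alpha : X -> X) (R : relation) : relation :=
  rcompl E (comp (conv R) (rcompl E (dq_zero le E alpha))).

Definition dq_minus (le E : relation) (alpha : X -> X) (R : relation) : relation :=
  rcompl E (comp (rcompl E (dq_zero le E alpha)) (conv R)).

Definition twisted_neg (E : relation) (alpha beta : X -> X) (R : relation)
  : relation :=
  comp (comp (comp (graph alpha) (graph beta)) (rcompl E R)) (graph beta).

Definition dq_prime (E : relation) (alpha beta : X -> X) (R : relation)
  : relation := twisted_neg E alpha beta R.

Definition tri_down (le E : relation) (alpha beta : X -> X) (n : nat)
  (R : relation) : relation :=
  Nat.iter (2 * n) (dq_sim le E alpha) (dq_prime E alpha beta R).

Definition tri_up (le E : relation) (alpha beta : X -> X) (n : nat)
  (R : relation) : relation :=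
  Nat.iter (2 * n) (dq_minus le E alpha) (dq_prime E alpha beta R).

End Rel.

(* Main.v *)
Require Import Defs.
From Stdlib Require Import Classical PeanoNat Lia.

Lemma tn_iff {X : Type} (E : X -> X -> Prop) (a g : X -> X)
  (Hg : forall x, g (g x) = x) S x y :
  twisted_neg E a g S x y <-> (E (g (a x)) (g y) /\ ~ S (g (a x)) (g y)).
Proof.
  unfold twisted_neg, comp, graph, rcompl; split.
  - intros [w [[z [[u [H1 H2]] H3]] H4]]; subst.
    rewrite Hg; exact H3.
  - intros H. exists (g y). split; [|apply Hg].
    exists (g (a x)). split; [exists (a x); auto| exact H].
Qed.

Lemma zero_iff {X : Type} (le E : X -> X -> Prop) (a : X -> X) x y :
  dq_zero le E a x y <-> (E y (a x) /\ ~ le y (a x)).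
Proof.
  unfold dq_zero, comp, graph, conv, rcompl; split.
  - intros [w [H1 H2]]; subst; exact H2.
  - intros H; exists (a x); auto.
Qed.

Lemma sim1 {X : Type} (le E : X -> X -> Prop) (a g : X -> X)
  (HE : is_equivalence E) (Hrefl : forall x, le x x)
  (Hga : forall x y, le x y -> le (g y) (g x))
  (Hsurj : forall y, exists x, a x = y)
  (HaE : forall x, E x (a x)) (HgE : forall x, E x (g x))
  S (HS : upset le E S) R
  (HR : forall x y, R x y <-> (E (g (a x)) (g y) /\ ~ S (g (a x)) (g y))) x y :
  dq_sim le E a R x y <-> (E x y /\ S (g y) (g x)).
Proof.
  destruct HE as [Er [Es Et]]. destruct HS as [HSE HSu].
  unfold dq_sim, rcompl, comp, conv. split.
  - intros [Hxy Hn]. split; [exact Hxy|].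
    apply NNPP; intro HnS.
    destruct (Hsurj y) as [z Hz]; subst y.
    apply Hn. exists z. split.
    + apply HR. split; [|exact HnS].
      apply Et with (a z); [apply Es, HgE|]. apply Et with x; [apply Es, Hxy| apply HgE].
    + split; [apply HaE|]. rewrite zero_iff. intros [_ H]; apply H, Hrefl.
  - intros [Hxy HS]. split; [exact Hxy|].
    intros [z [Hz [Hzy H0]]]. apply HR in Hz. destruct Hz as [Hz1 Hz2].
    rewrite zero_iff in H0.
    assert (Hl : le y (a z)).
    { apply NNPP; intro Hl; apply H0; split; [|exact Hl].
      apply Et with z; [apply Es; exact Hzy| apply HaE]. }
    apply Hz2. apply (HSu (g y) (g x)); auto.
Qed.

Lemma sim2 {X : Type} (le E : X -> X -> Prop) (a g : X -> X)
  (HE : is_equivalence E) (Hrefl : forall x, le x x)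
  (Hga : forall x y, le x y -> le (g y) (g x))
  (Hsurj : forall y, exists x, a x = y)
  (Hrefa : forall x y, le (a x) (a y) -> le x y)
  (Hgag : forall x, g x = a (g (a x)))
  (HaE : forall x, E x (a x)) (HgE : forall x, E x (g x))
  S (HS : upset le E S) T
  (HT : forall x y, T x y <-> (E x y /\ S (g y) (g x))) x y :
  dq_sim le E a T x y <-> (E (g x) (a (g y)) /\ ~ S (g x) (a (g y))).
Proof.
  destruct HE as [Er [Es Et]]. destruct HS as [HSE HSu].
  unfold dq_sim, rcompl, comp, conv. split.
  - intros [Hxy Hn]. split.
    + apply Et with x; [apply Es, HgE|]. apply Et with y; [exact Hxy|].
      apply Et with (g y); [apply HgE| apply HaE].
    + intro HS. destruct (Hsurj y) as [w Hw]; subst y.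
      apply Hn. exists w. split.
      * apply HT. split.
        -- apply Et with (a w); [apply HaE| apply Es, Hxy].
        -- rewrite (Hgag w). exact HS.
      * split; [apply HaE|]. rewrite zero_iff. intros [_ H]; apply H, Hrefl.
  - intros [H1 H2]. split.
    + apply Et with (g x); [apply HgE|]. apply Et with (a (g y)); [exact H1|].
      apply Es. apply Et with (g y); [apply HgE| apply HaE].
    + intros [z [Hz [Hzy H0]]]. apply HT in Hz. destruct Hz as [Hzx HSz].
      rewrite zero_iff in H0.
      assert (Hl : le y (a z)).
      { apply NNPP; intro Hl; apply H0; split; [|exact Hl].
        apply Et with z; [apply Es; exact Hzy| apply HaE]. }
      destruct (Hsurj y) as [w Hw]; subst y.
      apply Hrefa in Hl. apply Hga in Hl.
      apply H2. apply (HSu (g x) (g z)); auto.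
      rewrite (Hgag w) in Hl. exact Hl.
Qed.

Lemma minus1 {X : Type} (le E : X -> X -> Prop) (a g : X -> X)
  (HE : is_equivalence E) (Hrefl : forall x, le x x)
  (Hga : forall x y, le x y -> le (g y) (g x))
  (HaE : forall x, E x (a x)) (HgE : forall x, E x (g x))
  S (HS : upset le E S) R
  (HR : forall x y, R x y <-> (E (g (a x)) (g y) /\ ~ S (g (a x)) (g y))) x y :
  dq_minus le E a R x y <-> (E x y /\ S (g (a y)) (g (a x))).
Proof.
  destruct HE as [Er [Es Et]]. destruct HS as [HSE HSu].
  unfold dq_minus, rcompl, comp, conv. split.
  - intros [Hxy Hn]. split; [exact Hxy|].
    apply NNPP; intro HnS.
    apply Hn. exists (a x). split.
    + split; [apply HaE|]. rewrite zero_iff. intros [_ H]; apply H, Hrefl.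
    + apply HR. split; [|exact HnS].
      apply Et with (a y); [apply Es, HgE|]. apply Et with y; [apply Es, HaE|].
      apply Et with x; [apply Es, Hxy|]. apply Et with (a x); [apply HaE|apply HgE].
  - intros [Hxy HS]. split; [exact Hxy|].
    intros [z [[Hxz H0] Hz]]. apply HR in Hz. destruct Hz as [Hz1 Hz2].
    rewrite zero_iff in H0.
    assert (Hl : le z (a x)).
    { apply NNPP; intro Hl; apply H0; split; [|exact Hl].
      apply Et with x; [apply Es; exact Hxz| apply HaE]. }
    apply Hz2. apply (HSu (g (a y)) (g (a x))); auto.
Qed.

Lemma minus2 {X : Type} (le E : X -> X -> Prop) (a g : X -> X)
  (HE : is_equivalence E) (Hrefl : forall x, le x x)
  (Hga : forall x y, le x y -> le (g y) (g x))
  (Hamono : forall x y, le x y -> le (a x) (a y))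
  (HaE : forall x, E x (a x)) (HgE : forall x, E x (g x))
  S (HS : upset le E S) T
  (HT : forall x y, T x y <-> (E x y /\ S (g (a y)) (g (a x)))) x y :
  dq_minus le E a T x y <-> (E (g (a (a x))) (g (a y)) /\ ~ S (g (a (a x))) (g (a y))).
Proof.
  destruct HE as [Er [Es Et]]. destruct HS as [HSE HSu].
  unfold dq_minus, rcompl, comp, conv. split.
  - intros [Hxy Hn]. split.
    + apply Et with (a (a x)); [apply Es, HgE|]. apply Et with (a x); [apply Es, HaE|].
      apply Et with x; [apply Es, HaE|]. apply Et with y; [exact Hxy|].
      apply Et with (a y); [apply HaE|apply HgE].
    + intro HS. apply Hn. exists (a x). split.
      * split; [apply HaE|]. rewrite zero_iff. intros [_ H]; apply H, Hrefl.
      * apply HT. split; [|exact HS].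
        apply Et with x; [apply Es, Hxy| apply HaE].
  - intros [H1 H2]. split.
    + apply Et with (a (a x)); [apply Et with (a x); apply HaE|].
      apply Et with (g (a (a x))); [apply HgE|]. apply Et with (g (a y)); [exact H1|].
      apply Es. apply Et with (a y); [apply HaE|apply HgE].
    + intros [z [[Hxz H0] Hz]]. apply HT in Hz. destruct Hz as [Hyz HSz].
      rewrite zero_iff in H0.
      assert (Hl : le z (a x)).
      { apply NNPP; intro Hl; apply H0; split; [|exact Hl].
        apply Et with x; [apply Es; exact Hxz| apply HaE]. }
      apply Hamono in Hl. apply Hga in Hl.
      apply H2. apply (HSu (g (a z)) (g (a y))); auto.
Qed.

Lemma iter_comm {X : Type} (a : X -> X) n x : Nat.iter n a (a x) = a (Nat.iter n a x).
Proof. induction n; simpl; congruence. Qed.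

Lemma iter_key {X : Type} (a b : X -> X) (Hb : forall x, b x = a (b (a x))) n x :
  Nat.iter n a (b (Nat.iter n a x)) = b x.
Proof.
  induction n; simpl; [reflexivity|].
  rewrite <- iter_comm. rewrite <- Hb. exact IHn.
Qed.

Lemma iter_E {X : Type} (E : X -> X -> Prop) (a : X -> X) (HE : is_equivalence E)
  (HaE : forall x, E x (a x)) n x : E x (Nat.iter n a x).
Proof.
  destruct HE as [Er [Es Et]].
  induction n; simpl; [apply Er|]. apply Et with (Nat.iter n a x); auto.
Qed.

Lemma iter_mono {X : Type} (le : X -> X -> Prop) (a : X -> X)
  (Ha : forall x y, le x y <-> le (a x) (a y)) n x y :
  le x y <-> le (Nat.iter n a x) (Nat.iter n a y).
Proof.
  induction n; simpl; [tauto|]. rewrite <- Ha. exact IHn.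
Qed.

Lemma iter_bij {X : Type} (a : X -> X) (Ha : bijective_fun a) n :
  bijective_fun (Nat.iter n a).
Proof.
  destruct Ha as [Hi Hs]. induction n; simpl.
  - split; auto. intros y; exists y; auto.
  - destruct IHn as [Ii Is]. split; change (Nat.iter (S n) a) with (fun x => a (Nat.iter n a x)).
    + intros x y H. apply Ii, Hi, H.
    + intros y. destruct (Hs y) as [z Hz]. destruct (Is z) as [w Hw].
      exists w. change (a (Nat.iter n a w) = y). congruence.
Qed.

Lemma comp_bij {X : Type} (f g : X -> X) :
  bijective_fun f -> bijective_fun g -> bijective_fun (fun x => f (g x)).
Proof.
  intros [fi fs] [gi gs]. split.
  - intros x y H. apply gi, fi, H.
  - intros y. destruct (fs y) as [z Hz]. destruct (gs z) as [w Hw].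
    exists w. congruence.
Qed.

Theorem proposition3p20 (X : Type) (le E : X -> X -> Prop)
  (alpha beta : X -> X) (n : nat)
  (Hle : is_poset le) (HE : is_equivalence E) (HleE : subrel le E)
  (Halpha : order_automorphism le alpha)
  (Hbeta : dual_order_automorphism le beta) (Hbeta_inv : self_inverse beta)
  (HalphaE : subrel (graph alpha) E) (HbetaE : subrel (graph beta) E)
  (Hbab : releq (graph beta)
                (comp (comp (graph alpha) (graph beta)) (graph alpha))) :
  exists bd bu : X -> X,
    dual_order_automorphism le bd /\ self_inverse bd /\
    dual_order_automorphism le bu /\ self_inverse bu /\
    (* (i) *)
    subrel (graph bd) E /\ subrel (graph bu) E /\
    (* (ii) *)
    releq (graph bd) (comp (comp (graph alpha) (graph bd)) (graph alpha)) /\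
    releq (graph bu) (comp (comp (graph alpha) (graph bu)) (graph alpha)) /\
    (* (iii) *)
    (forall R : X -> X -> Prop, upset le E R ->
       releq (tri_down le E alpha beta n R) (twisted_neg E alpha bd R) /\
       releq (tri_up le E alpha beta n R) (twisted_neg E alpha bu R)).
Proof.
  destruct Hle as [Hrefl _].
  destruct Halpha as [Habij Hamono]. destruct Hbeta as [Hbbij Hbmono].
  assert (HaE : forall x, E x (alpha x)) by (intros x; apply HalphaE; reflexivity).
  assert (HbE : forall x, E x (beta x)) by (intros x; apply HbetaE; reflexivity).
  assert (Hb : forall x, beta x = alpha (beta (alpha x))).
  { intros x. destruct (Hbab x (beta x)) as [H _].
    destruct (H eq_refl) as [z [[w [H1 H2]] H3]]. unfold graph in *. congruence. }
  assert (Hsurj : forall y, exists x, alpha x = y) by apply Habij.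
  destruct HE as [Er [Es Et]].
  set (gd := fun k x => Nat.iter k alpha (beta x)).
  set (gu := fun k x => beta (Nat.iter k alpha x)).
  assert (Gd_inv : forall k x, gd k (gd k x) = x).
  { intros k x; unfold gd. rewrite iter_key; auto. }
  assert (Gu_inv : forall k x, gu k (gu k x) = x).
  { intros k x; unfold gu. rewrite iter_key; auto. }
  assert (Gd_anti : forall k x y, le x y <-> le (gd k y) (gd k x)).
  { intros k x y; unfold gd. rewrite <- iter_mono; auto. }
  assert (Gu_anti : forall k x y, le x y <-> le (gu k y) (gu k x)).
  { intros k x y; unfold gu. rewrite <- Hbmono. apply iter_mono; auto. }
  assert (Gd_E : forall k x, E x (gd k x)).
  { intros k x; unfold gd. apply Et with (beta x); auto. apply iter_E; auto. repeat split; auto. }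
  assert (Gu_E : forall k x, E x (gu k x)).
  { intros k x; unfold gu. apply Et with (Nat.iter k alpha x); auto. apply iter_E; auto. repeat split; auto. }
  assert (Gd_aga : forall k x, gd k x = alpha (gd k (alpha x))).
  { intros k x; unfold gd. rewrite <- iter_comm. rewrite <- Hb. reflexivity. }
  assert (Gu_aga : forall k x, gu k x = alpha (gu k (alpha x))).
  { intros k x; unfold gu. rewrite iter_comm. apply Hb. }
  assert (HEq : is_equivalence E) by (repeat split; auto).
  assert (Hrefa : forall x y, le (alpha x) (alpha y) -> le x y) by (intros x y; apply Hamono).
  assert (Hamono' : forall x y, le x y -> le (alpha x) (alpha y)) by (intros x y; apply Hamono).
  exists (gd n), (gu n).
  split; [split; [apply (comp_bij (Nat.iter n alpha) beta); auto; apply iter_bij; auto| apply Gd_anti]|].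
  split; [intros x; apply Gd_inv|].
  split; [split; [apply (comp_bij beta (Nat.iter n alpha)); auto; apply iter_bij; auto| apply Gu_anti]|].
  split; [intros x; apply Gu_inv|].
  split; [intros x y H; unfold graph in H; subst; apply Gd_E|].
  split; [intros x y H; unfold graph in H; subst; apply Gu_E|].
  split.
  { intros x y; unfold comp, graph; split.
    - intros H; subst. exists (gd n (alpha x)). split; [exists (alpha x); auto|].
      first [apply Gd_aga | symmetry; apply Gd_aga].
    - intros [z [[w [H1 H2]] H3]]; subst. first [apply Gd_aga | symmetry; apply Gd_aga]. }
  split.
  { intros x y; unfold comp, graph; split.
    - intros H; subst. exists (gu n (alpha x)). split; [exists (alpha x); auto|].
      first [apply Gu_aga | symmetry; apply Gu_aga].
    - intros [z [[w [H1 H2]] H3]]; subst. first [apply Gu_aga | symmetry; apply Gu_aga]. }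
  intros Sr HS.
  assert (Ganti_d : forall k x y, le x y -> le (gd k y) (gd k x)) by (intros; apply Gd_anti; auto).
  assert (Ganti_u : forall k x y, le x y -> le (gu k y) (gu k x)) by (intros; apply Gu_anti; auto).
  split.
  - assert (Hind : forall k x y, tri_down le E alpha beta k Sr x y <->
              (E (gd k (alpha x)) (gd k y) /\ ~ Sr (gd k (alpha x)) (gd k y))).
    { induction k; intros x y.
      - unfold tri_down; simpl. apply tn_iff. exact Hbeta_inv.
      - unfold tri_down. replace (2 * S k) with (S (S (2 * k))) by lia.
        simpl Nat.iter.
        rewrite (sim2 le E alpha (gd k) HEq Hrefl (Ganti_d k) Hsurj Hrefa (Gd_aga k)
                   HaE (Gd_E k) Sr HS).
        + change (gd (S k) (alpha x)) with (alpha (gd k (alpha x))). change (gd (S k) y) with (alpha (gd k y)). rewrite <- (Gd_aga k x). tauto.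
        + intros u v. apply (sim1 le E alpha (gd k) HEq Hrefl (Ganti_d k) Hsurj HaE (Gd_E k) Sr HS).
          apply IHk. }
    intros x y. rewrite Hind. rewrite tn_iff; [tauto|]. apply Gd_inv.
  - assert (Hind : forall k x y, tri_up le E alpha beta k Sr x y <->
              (E (gu k (alpha x)) (gu k y) /\ ~ Sr (gu k (alpha x)) (gu k y))).
    { induction k; intros x y.
      - unfold tri_up; simpl. apply tn_iff. exact Hbeta_inv.
      - unfold tri_up. replace (2 * S k) with (S (S (2 * k))) by lia.
        simpl Nat.iter.
        rewrite (minus2 le E alpha (gu k) HEq Hrefl (Ganti_u k) Hamono'
                   HaE (Gu_E k) Sr HS).
        + assert (Hs : forall z, gu (S k) z = gu k (alpha z)).
          { intros z; unfold gu; simpl. rewrite iter_comm. reflexivity. }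
          rewrite !Hs. tauto.
        + intros u v. apply (minus1 le E alpha (gu k) HEq Hrefl (Ganti_u k) HaE (Gu_E k) Sr HS).
          apply IHk. }
    intros x y. rewrite Hind. rewrite tn_iff; [tauto|]. apply Gu_inv.
Qed.
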